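(* For integers $j,k,n\ge 0$ let $$a_n(j,k)=\binom{n}{j}^2\binom{n}{k}^2\binom{n+j}{n}\binom{n+k}{n}\binom{j+k}{n}.$$ Then for all integers $n\ge 1$ and $j,k\ge 0$: (a) $v_2\big(a_n(j,k)\big)=1$ if and only if $\{j,k\}=\{0,n\}$ and $n$ is a power of $2$; (b) $v_2\big(a_n(j,k)\big)\ge 2$ otherwise.
   Context: $v_2$ denotes the $2$-adic valuation on the integers, with the convention $v_2(0)=+\infty$. Binomial coefficients $\binom{a}{b}$ with $b>a\ge 0$ are $0$. ''Power of $2$'' means $2^m$ for some integer $m\ge 0$ (so $n=1$ is included). *)

(* Defs.v *)
From mathcomp Require Import all_boot.
Set Implicit Arguments. Unset Strict Implicit. Unset Printing Implicit Defensive.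

(* 2-adic valuation with values in N ∪ {+oo}: None stands for +oo (v2 0). *)
Definition v2 (a : nat) : option nat :=
  if a == 0 then None else Some (logn 2 a).

Definition v2_ge (a m : nat) : Prop :=
  match v2 a with None => True | Some v => m <= v end.

Definition a_n (n j k : nat) : nat :=
  'C(n, j) ^ 2 * 'C(n, k) ^ 2 * 'C(n + j, n) * 'C(n + k, n) * 'C(j + k, n).

Definition is_pow2 (n : nat) : Prop := exists m, n = 2 ^ m.

(* Main.v *)
Require Import Defs.
From mathcomp Require Import all_boot zify.
From Stdlib Require Import Classical.
Set Implicit Arguments. Unset Strict Implicit. Unset Printing Implicit Defensive.

Lemma cb_rec n : 'C((n.+1).*2, n.+1) * n.+1 = 2 * (n.*2.+1) * 'C(n.*2, n).
Proof.
have h1 := mul_bin_diag (n.*2.+2) n.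
have h2 := mul_bin_diag (n.*2.+1) n.
have h3 : 'C(n.*2.+1, n.+1) = 'C(n.*2.+1, n).
  rewrite -(bin_sub (n:=n.*2.+1) (m:=n.+1)); last by lia.
  congr 'C(_, _); lia.
rewrite h3 /= in h2; rewrite /= in h1.
have e : (n.+1).*2 = n.*2.+2 by rewrite doubleS.
rewrite e.
apply/eqP; rewrite -(eqn_pmul2r (m:=n.+1)) //; apply/eqP.
move: h1 h2; set A := 'C(_, n.+1); set B := 'C(_, n); set C := 'C(n.*2, n).
move=> h1 h2. nia.
Qed.

Definition g n := logn 2 'C(n.*2, n).

Lemma logn2_odd m : logn 2 (m.*2.+1) = 0.
Proof. apply: logn_coprime. by rewrite coprime2n /= odd_double. Qed.

Lemma logn2_dbl m : 0 < m -> logn 2 (m.*2) = (logn 2 m).+1.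
Proof. move=> hm. by rewrite -muln2 mulnC lognM // (_ : logn 2 2 = 1). Qed.

Lemma g_rec n : g n.+1 + logn 2 n.+1 = (g n).+1.
Proof.
have := congr1 (logn 2) (cb_rec n).
rewrite /g lognM ?bin_gt0 //; last by lia.
rewrite -mulnA lognM ?muln_gt0 ?bin_gt0 //; last by lia.
rewrite lognM ?bin_gt0 //; last by lia.
rewrite logn2_odd (_ : logn 2 2 = 1) // add0n add1n.
Qed.

Lemma g_odd m : g (m.*2.+1) = (g (m.*2)).+1.
Proof. have := g_rec (m.*2). by rewrite logn2_odd addn0. Qed.

Lemma g_even m : g (m.*2) = g m.
Proof.
elim: m => [//|m IH].
have h := g_rec (m.*2.+1).
rewrite g_odd IH in h. have h2 := g_rec m.
have e : m.*2.+2 = (m.+1).*2 by rewrite doubleS.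
rewrite e logn2_dbl // in h.
lia.
Qed.

Lemma pow2_odd m : 0 < m -> ~ is_pow2 (m.*2.+1).
Proof.
move=> hm [[|e] He]; first by rewrite expn0 in He; lia.
have := congr1 odd He. by rewrite /= odd_double oddX.
Qed.

Lemma pow2_dbl m : is_pow2 (m.*2) <-> is_pow2 m.
Proof.
split=> [[[|e] He]|[e He]].
- rewrite expn0 in He; lia.
- exists e; rewrite expnS in He; lia.
- exists e.+1; rewrite expnS; lia.
Qed.

Lemma g_main n : 0 < n -> 1 <= g n /\ (g n = 1 <-> is_pow2 n).
Proof.
elim: n {-2}n (leqnn n) => [|N IH] n hn hpos; first by lia.
rewrite -(odd_double_half n) in hpos *.
case hod: (odd n) => /=.
- rewrite g_odd g_even.
  case: (posnP n./2) => [->|h2].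
  + split; first by [].
    split=> // _; by exists 0.
  + have [IH1 IH2] := IH n./2 ltac:(lia) h2.
    split; first by lia.
    split; first by lia.
    by move/(pow2_odd h2).
- rewrite add0n in hpos *. rewrite g_even.
  have h2 : 0 < n./2 by move: hpos; rewrite -muln2; lia.
  have [IH1 IH2] := IH n./2 ltac:(lia) h2.
  split=> //. rewrite pow2_dbl. exact IH2.
Qed.

Lemma cdbl j : 0 < j -> 2 %| 'C(j.*2, j).
Proof.
case: j => [//|i] _.
have e : i.+1.*2 = (i.*2.+1).+1 by rewrite doubleS.
rewrite e binS.
have h3 : 'C(i.*2.+1, i.+1) = 'C(i.*2.+1, i).
  rewrite -(bin_sub (n:=i.*2.+1) (m:=i.+1)); last by lia.
  congr 'C(_, _); lia.
by rewrite h3 addnn -muln2 dvdn_mull.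
Qed.

Lemma trin j n : j <= n -> 'C(n, j) * 'C(n + j, n) = 'C(n + j, j.*2) * 'C(j.*2, j).
Proof.
move=> hjn.
have F : 0 < j`! * j`! * (n - j)`! by rewrite !muln_gt0 !fact_gt0.
apply/eqP; rewrite -(eqn_pmul2r F); apply/eqP.
have h1 := bin_fact hjn.
have h2 := bin_fact (leq_addr j n).
have h3 := bin_fact (leq_addr j j). rewrite addnn in h3.
have h4 : j.*2 <= n + j by lia.
have h5 := bin_fact h4.
have e1 : n + j - n = j by lia.
have e2 : j.*2 - j = j by lia.
have e3 : n + j - j.*2 = n - j by lia.
rewrite e1 in h2; rewrite e2 in h3; rewrite e3 in h5.
transitivity (n + j)`!.
- rewrite -h2 -h1. nia.
- rewrite -h5 -h3. nia.
Qed.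

Lemma even_prod j n : 0 < j -> j <= n -> 2 %| 'C(n, j) * 'C(n + j, n).
Proof. move=> h0 h1; rewrite trin //; apply: dvdn_mull; exact: cdbl. Qed.

Lemma four_dvd n j k : 1 <= n -> ~ ((j = 0 /\ k = n) \/ (j = n /\ k = 0)) ->
  4 %| a_n n j k.
Proof.
move=> hn hS; rewrite /a_n.
case: (ltnP n j) => hj; first by rewrite (bin_small hj) /= !mul0n dvdn0.
case: (ltnP n k) => hk; first by rewrite (bin_small hk) /= !muln0 !mul0n dvdn0.
case: (posnP j) => [j0|j0].
  have hk' : k < n by subst j; lia.
  have hC : 'C(j + k, n) = 0 by apply: bin_small; lia.
  by rewrite hC muln0 dvdn0.
case: (posnP k) => [k0|k0].
  have hj' : j < n by subst k; lia.
  have hC : 'C(j + k, n) = 0 by apply: bin_small; lia.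
  by rewrite hC muln0 dvdn0.
have -> : 'C(n, j) ^ 2 * 'C(n, k) ^ 2 * 'C(n + j, n) * 'C(n + k, n) * 'C(j + k, n)
  = ('C(n, j) * 'C(n + j, n)) * ('C(n, k) * 'C(n + k, n)) * ('C(n, j) * 'C(n, k) * 'C(j + k, n)).
  rewrite !expnS !expn0 !muln1. nia.
apply: dvdn_mulr.
rewrite (_ : 4 = 2 * 2) //.
by apply: dvdn_mul; apply: even_prod.
Qed.

Theorem mainTheorem1 (n j k : nat) : 1 <= n ->
  (v2 (a_n n j k) = Some 1 <->
     (((j = 0 /\ k = n) \/ (j = n /\ k = 0)) /\ is_pow2 n))
  /\
  (~ (((j = 0 /\ k = n) \/ (j = n /\ k = 0)) /\ is_pow2 n) ->
     v2_ge (a_n n j k) 2).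
Proof.
move=> hn.
have [S|nS] := classic ((j = 0 /\ k = n) \/ (j = n /\ k = 0)).
- have ha : a_n n j k = 'C(n.*2, n).
    rewrite /a_n -addnn.
    by case: S => [[-> ->]|[-> ->]]; rewrite ?bin0 ?binn ?addn0 ?add0n ?binn /= ?muln1 ?mul1n.
  have hpos : 0 < 'C(n.*2, n) by rewrite bin_gt0 -addnn leq_addr.
  have [G1 G2] := g_main hn.
  rewrite /v2_ge /v2 ha (negbTE (lt0n_neq0 hpos)).
  split.
  + split=> [[h]|[_ h]]; [split=> //; apply/G2; exact: h | by rewrite -/(g n) (proj2 G2 h)].
  + move=> h. rewrite -/(g n).
    have : g n <> 1 by move=> e; apply: h; split=> //; exact: (proj1 G2 e).
    lia.
- have h4 := four_dvd hn nS.
  rewrite /v2_ge /v2.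
  case: eqP => [_|ha].
  + split=> //; split=> // [[]] //.
  + have hpos : 0 < a_n n j k by lia.
    move: h4; rewrite (_ : 4 = 2 ^ 2) // pfactor_dvdn // => h4.
    split=> //; split=> [[e]|[]] //; lia.
Qed.
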